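(* For $t\in\mathbb R$ let $a_n=a_n(t)>0$ ($n\ge1$, $a_0=0$) be the recurrence coefficients in $a_{n+1}p_{n+1}(x)=xp_n(x)-a_np_{n-1}(x)$ of the orthonormal polynomials for the weight $\exp(-x^4/4-tx^2)$ on $\mathbb R$. Then for all $n\ge1$: $$a_n^2\big(a_{n-1}^2+a_n^2+a_{n+1}^2\big)+2ta_n^2=n,$$ $$4a_n^3\ddot a_n=(3a_n^4+2ta_n^2-n)(a_n^4+2ta_n^2+n),$$ and $u_n=a_n^2$ satisfies the Painlevé IV equation $$\ddot u=\frac{\dot u^2}{2u}+\frac{3u^3}{2}+4tu^2+2(t^2-\alpha)u+\frac{\beta}{u}\quad\text{with }\alpha=-\frac n2,\ \beta=-\frac{n^2}{2}.$$
   Context: Dots denote $d/dt$. *)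

(* Defs.v *)
From Stdlib Require Import Reals.
From Coquelicot Require Import Coquelicot.
Open Scope R_scope.

Definition quartic_weight (t x : R) : R := exp (- x ^ 4 / 4 - t * x ^ 2).

Definition is_poly_deg_pos_lead (n : nat) (f : R -> R) : Prop :=
  exists c : nat -> R, 0 < c n /\ forall x, f x = sum_f_R0 (fun k => c k * x ^ k) n.

Definition orthonormal_system (w : R -> R) (p : nat -> R -> R) : Prop :=
  (forall n, is_poly_deg_pos_lead n (p n)) /\
  (forall m n, is_RInt_gen (fun x => p m x * p n x * w x)
                  (Rbar_locally m_infty) (Rbar_locally p_infty)
                  (if Nat.eqb m n then 1 else 0)).

(* a : nat -> R are the recurrence coefficients of p:
   a_0 = 0, a_n > 0 for n >= 1 and a_{n+1} p_{n+1}(x) = x p_n(x) - a_n p_{n-1}(x)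
   (for n = 0 the last term vanishes since a_0 = 0). *)
Definition recurrence_coeffs (p : nat -> R -> R) (a : nat -> R) : Prop :=
  a 0%nat = 0 /\ (forall n, (1 <= n)%nat -> 0 < a n) /\
  (forall n x, a (S n) * p (S n) x = x * p n x - a n * p (n - 1)%nat x).

(* Main.v *)
Require Import Defs.
From Stdlib Require Import Reals Lra Lia Classical FunctionalExtensionality.
From Coquelicot Require Import Coquelicot.
Open Scope R_scope.

Notation mI := (Rbar_locally m_infty).
Notation pI := (Rbar_locally p_infty).

Lemma iext (f g : R -> R) l : (forall x, f x = g x) ->
  is_RInt_gen f mI pI l -> is_RInt_gen g mI pI l.
Proof.
  intros H H1. eapply is_RInt_gen_ext; [| exact H1].
  apply filter_forall. intros; auto.
Qed.

Lemma ilin (f g : R -> R) lf lg al be :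
  is_RInt_gen f mI pI lf -> is_RInt_gen g mI pI lg ->
  is_RInt_gen (fun x => al * f x + be * g x) mI pI (al * lf + be * lg).
Proof.
  intros H1 H2.
  pose proof (is_RInt_gen_plus _ _ _ _ (is_RInt_gen_scal _ al _ H1) (is_RInt_gen_scal _ be _ H2)) as H.
  exact H.
Qed.



Lemma ile (f g : R -> R) lf lg : (forall x, f x <= g x) ->
  is_RInt_gen f mI pI lf -> is_RInt_gen g mI pI lg -> lf <= lg.
Proof.
  intros H H1 H2.
  pose proof (ilin _ _ _ _ (-1) 1 H1 H2) as H3.
  assert (H4 : norm ((-1)*lf + 1*lg) <= (-1)*lf + 1*lg).
  { refine (RInt_gen_norm _ _ _ _ _ _ H3 H3).
    - apply Filter_prod with (fun x => x < 0) (fun y => 0 < y).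
      + exists 0; auto.
      + exists 0; auto.
      + intros x y Hx Hy; simpl; lra.
    - apply filter_forall. intros ab x _.
      specialize (H x). unfold norm; simpl. unfold abs; simpl. rewrite Rabs_right; lra. }
  pose proof (norm_ge_0 ((-1)*lf + 1*lg)). lra.
Qed.

Lemma gen_lim (f : R -> R) l : is_RInt_gen f mI pI l -> (forall a b, ex_RInt f a b) ->
  forall eps, 0 < eps -> exists A B, forall a b, a < A -> B < b -> Rabs (RInt f a b - l) < eps.
Proof.
  intros H Hex eps Heps.
  assert (Hb : locally l (ball l (mkposreal eps Heps))) by apply locally_ball.
  specialize (H _ Hb).
  destruct H as [Q Rr HQ HR Hqr].
  destruct HQ as [A HA]. destruct HR as [B HB].
  exists A, B. intros a b Ha Hb'.
  destruct (Hqr a b (HA a Ha) (HB b Hb')) as [y [Hy1 Hy2]].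
  simpl in Hy1. rewrite (is_RInt_unique _ _ _ _ Hy1).
  exact Hy2.
Qed.

Lemma RInt_const' a b c : RInt (fun _ => c) a b = (b - a) * c.
Proof. rewrite RInt_const. reflexivity. Qed.

Lemma boundary_pos (F dF : R -> R) L M :
  (forall x, is_derive F x (dF x)) -> (forall x, continuous dF x) ->
  is_RInt_gen dF mI pI L -> is_RInt_gen F mI pI M -> 0 < L -> False.
Proof.
  intros HD HC HL HM Lpos.
  assert (HCF : forall x, continuous F x).
  { intros x. apply (ex_derive_continuous (K:=R_AbsRing) (V:=R_NormedModule) F x). exists (dF x). auto. }
  assert (exF : forall a b, ex_RInt F a b).
  { intros a b. apply (ex_RInt_continuous (V:=R_CompleteNormedModule)). intros; auto. }
  assert (exdF : forall a b, ex_RInt dF a b).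
  { intros a b. apply (ex_RInt_continuous (V:=R_CompleteNormedModule)). intros; auto. }
  assert (RdF : forall a b, RInt dF a b = F b - F a).
  { intros a b. apply is_RInt_unique.
    apply (is_RInt_derive F dF a b); intros; auto. }
  destruct (gen_lim _ _ HL exdF (L/2)) as [A [B HAB]]; [lra|].
  destruct (gen_lim _ _ HM exF 1) as [A' [B' HAB']]; [lra|].
  assert (Key : forall a b, a < A -> B < b -> F b - F a > L/2).
  { intros a b Ha Hb. specialize (HAB a b Ha Hb). rewrite RdF in HAB.
    apply Rabs_def2 in HAB. lra. }
  destruct (classic (forall b, B < b -> F b > L/4)) as [Hc|Hc].
  - set (b1 := Rmax B B' + 1). set (b2 := b1 + 12 / L). set (a0 := A' - 1).
    assert (Hb1 : B < b1 /\ B' < b1).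
    { unfold b1. pose proof (Rmax_l B B'). pose proof (Rmax_r B B'). lra. }
    assert (H12 : 0 < 12 / L) by (apply Rdiv_lt_0_compat; lra).
    assert (E1 := HAB' a0 b1 ltac:(unfold a0; lra) ltac:(lra)).
    assert (E2 := HAB' a0 b2 ltac:(unfold a0; lra) ltac:(unfold b2; lra)).
    rewrite <- (RInt_Chasles F a0 b1 b2) in E2 by auto.
    assert (Hge : RInt (fun _ => L/4) b1 b2 <= RInt F b1 b2).
    { apply RInt_le; [unfold b2; lra | apply ex_RInt_const | auto |].
      intros x Hx. apply Rlt_le, Hc. lra. }
    rewrite RInt_const' in Hge.
    replace ((b2 - b1) * (L/4)) with 3 in Hge by (unfold b2; field; lra).
    apply Rabs_def2 in E1. apply Rabs_def2 in E2. simpl in E2. unfold plus in E2; simpl in E2. lra.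
  - apply not_all_ex_not in Hc. destruct Hc as [b0 Hb0].
    apply imply_to_and in Hb0. destruct Hb0 as [Hb0 Hb0'].
    assert (Hneg : forall a, a < A -> F a < - L/4).
    { intros a Ha. specialize (Key a b0 Ha Hb0). lra. }
    set (a2 := Rmin A A' - 1). set (a1 := a2 - 12 / L). set (b := B' + 1).
    assert (Ha2 : a2 < A /\ a2 < A').
    { unfold a2. pose proof (Rmin_l A A'). pose proof (Rmin_r A A'). lra. }
    assert (H12 : 0 < 12 / L) by (apply Rdiv_lt_0_compat; lra).
    assert (E1 := HAB' a2 b ltac:(lra) ltac:(unfold b; lra)).
    assert (E2 := HAB' a1 b ltac:(unfold a1; lra) ltac:(unfold b; lra)).
    rewrite <- (RInt_Chasles F a1 a2 b) in E2 by auto.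
    assert (Hle : RInt F a1 a2 <= RInt (fun _ => - L/4) a1 a2).
    { apply RInt_le; [unfold a1; lra | auto | apply ex_RInt_const |].
      intros x Hx. apply Rlt_le, Hneg. lra. }
    rewrite RInt_const' in Hle.
    replace ((a2 - a1) * (- L/4)) with (-3) in Hle by (unfold a1; field; lra).
    apply Rabs_def2 in E1. apply Rabs_def2 in E2. simpl in E2. unfold plus in E2; simpl in E2. lra.
Qed.

Lemma boundary (F dF : R -> R) L M :
  (forall x, is_derive F x (dF x)) -> (forall x, continuous dF x) ->
  is_RInt_gen dF mI pI L -> is_RInt_gen F mI pI M -> L = 0.
Proof.
  intros HD HC HL HM.
  destruct (Rtotal_order L 0) as [Hlt|[Heq|Hgt]]; auto.
  - exfalso. apply (boundary_pos (fun x => - F x) (fun x => - dF x) (-L) (-M)).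
    + intros x. apply (is_derive_opp F x (dF x)). auto.
    + intros x. apply (continuous_opp dF x). auto.
    + exact (is_RInt_gen_opp _ _ HL).
    + exact (is_RInt_gen_opp _ _ HM).
    + lra.
  - exfalso. apply (boundary_pos F dF L M); auto.
Qed.

Ltac rring := match goal with |- ?x = ?y => change (x = y :> R) end; cbv beta; ring.

Lemma cR_mult (f g : R -> R) x : continuous f x -> continuous g x -> continuous (fun y => f y * g y) x.
Proof. intros. apply (continuous_mult (U:=R_UniformSpace) (K:=R_AbsRing) f g x); auto. Qed.
Lemma cR_plus (f g : R -> R) x : continuous f x -> continuous g x -> continuous (fun y => f y + g y) x.
Proof. intros. apply (continuous_plus (U:=R_UniformSpace) (V:=R_NormedModule) f g x); auto. Qed.
Lemma cR_opp (f : R -> R) x : continuous f x -> continuous (fun y => - f y) x.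
Proof. intros. apply (continuous_opp (U:=R_UniformSpace) (V:=R_NormedModule) f x); auto. Qed.
Lemma cR_minus (f g : R -> R) x : continuous f x -> continuous g x -> continuous (fun y => f y - g y) x.
Proof. intros. apply (cR_plus f (fun y => - g y)); auto. apply cR_opp; auto. Qed.
Lemma cR_const (c x : R) : continuous (fun _ : R => c) x.
Proof. apply (continuous_const (U:=R_UniformSpace) (V:=R_UniformSpace)). Qed.
Lemma cR_id (x : R) : continuous (fun y : R => y) x.
Proof. apply (continuous_id (U:=R_UniformSpace)). Qed.
Lemma cR_der (f : R -> R) x l : is_derive f x l -> continuous f x.
Proof. intros H. apply (ex_derive_continuous (K:=R_AbsRing) (V:=R_NormedModule) f x). exists l; auto. Qed.

Lemma dR_eq (f : R -> R) x l l' : is_derive f x l -> l = l' -> is_derive f x l'.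
Proof. intros H <-; auto. Qed.
Lemma dR_mult (f g : R -> R) x df dg : is_derive f x df -> is_derive g x dg ->
  is_derive (fun y => f y * g y) x (df * g x + f x * dg).
Proof. intros. apply (is_derive_mult (K:=R_AbsRing) f g x df dg); auto. intros; apply Rmult_comm. Qed.
Lemma dR_plus (f g : R -> R) x df dg : is_derive f x df -> is_derive g x dg ->
  is_derive (fun y => f y + g y) x (df + dg).
Proof. intros. apply (is_derive_plus (K:=R_AbsRing) (V:=R_NormedModule) f g x df dg); auto. Qed.
Lemma dR_minus (f g : R -> R) x df dg : is_derive f x df -> is_derive g x dg ->
  is_derive (fun y => f y - g y) x (df - dg).
Proof. intros. apply (is_derive_minus (K:=R_AbsRing) (V:=R_NormedModule) f g x df dg); auto. Qed.
Lemma dR_id x : is_derive (fun y : R => y) x 1.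
Proof. apply (is_derive_id (K:=R_AbsRing)). Qed.
Lemma dR_const (c x : R) : is_derive (fun _ : R => c) x 0.
Proof. apply (is_derive_const (K:=R_AbsRing) (V:=R_NormedModule)). Qed.
Lemma dR_ext (f g : R -> R) x l : (forall y, f y = g y) -> is_derive f x l -> is_derive g x l.
Proof. intros. apply (is_derive_ext (K:=R_AbsRing) (V:=R_NormedModule) f g); auto. Qed.
Lemma dR_inv (f : R -> R) x l : is_derive f x l -> f x <> 0 -> is_derive (fun y => / f y) x (- l / f x ^ 2).
Proof. apply is_derive_inv. Qed.

Section Poly.
Variable w : R -> R.
Variables (p : nat -> R -> R) (a : nat -> R).
Hypothesis Hort : forall m n, is_RInt_gen (fun x => p m x * p n x * w x) mI pI (if Nat.eqb m n then 1 else 0).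
Hypothesis Ha0 : a 0%nat = 0.
Hypothesis Hpos : forall n, (1 <= n)%nat -> 0 < a n.
Hypothesis Hrec : forall n x, a (S n) * p (S n) x = x * p n x - a n * p (n - 1)%nat x.

Definition isip (f : R -> R) k (l : R) : Prop := is_RInt_gen (fun x => f x * p k x * w x) mI pI l.
Definition ip (f : R -> R) k : R := RInt_gen (fun x => f x * p k x * w x) mI pI.
Definition G (f : R -> R) := forall k, isip f k (ip f k).

Lemma isip_ip f k l : isip f k l -> ip f k = l.
Proof. intros H. apply (is_RInt_gen_unique _ _ H). Qed.

Lemma isip_G f (lf : nat -> R) : (forall k, isip f k (lf k)) -> G f.
Proof. intros H k. rewrite (isip_ip _ _ _ (H k)). auto. Qed.

Lemma isip_lin f g k lf lg al be : isip f k lf -> isip g k lg ->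
  isip (fun x => al * f x + be * g x) k (al * lf + be * lg).
Proof.
  intros H1 H2. unfold isip. eapply iext; [| apply (ilin _ _ _ _ al be H1 H2)].
  intros x. simpl. ring.
Qed.

Lemma G_lin f g al be : G f -> G g -> G (fun x => al * f x + be * g x).
Proof. intros H1 H2. apply (isip_G _ (fun k => al * ip f k + be * ip g k)). intros k. apply isip_lin; auto. Qed.

Lemma ip_lin f g al be k : G f -> G g -> ip (fun x => al * f x + be * g x) k = al * ip f k + be * ip g k.
Proof. intros H1 H2. apply isip_ip. apply isip_lin; auto. Qed.

Lemma xrec k x : x * p k x = a (S k) * p (S k) x + a k * p (k - 1)%nat x.
Proof. rewrite Hrec. ring. Qed.

Lemma isip_x f k : G f -> isip (fun x => x * f x) k (a (S k) * ip f (S k) + a k * ip f (k - 1)%nat).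
Proof.
  intros H. unfold isip. eapply iext; [| apply (ilin _ _ _ _ (a (S k)) (a k) (H (S k)) (H (k-1)%nat))].
  intros x. simpl. replace (x * f x * p k x * w x) with (f x * (x * p k x) * w x) by ring.
  rewrite xrec. ring.
Qed.

Lemma G_x f : G f -> G (fun x => x * f x).
Proof. intros H. apply (isip_G _ _ (fun k => isip_x f k H)). Qed.

Lemma ip_x f k : G f -> ip (fun x => x * f x) k = a (S k) * ip f (S k) + a k * ip f (k - 1)%nat.
Proof. intros H. apply isip_ip, isip_x; auto. Qed.

Lemma G_p m : G (p m).
Proof. apply (isip_G _ (fun k => if Nat.eqb m k then 1 else 0)). intros k. cbv beta. exact (Hort m k). Qed.

Lemma ip_p m k : ip (p m) k = if Nat.eqb m k then 1 else 0.
Proof. apply isip_ip. exact (Hort m k). Qed.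


Hypothesis Hp0 : forall x, p 0%nat x = p 0%nat 0.

Definition q n x := Derive (p n) x.

Lemma p_fun n x : p (S n) x = / a (S n) * (x * p n x - a n * p (n - 1)%nat x).
Proof.
  assert (H := Hpos (S n) ltac:(lia)). rewrite <- Hrec. field. lra.
Qed.

Definition Dp n := (forall x, is_derive (p n) x (q n x)) /\ (forall x, continuous (q n) x).

Lemma q0 x : q 0 x = 0.
Proof.
  unfold q. apply is_derive_unique. apply (dR_ext (fun _ => p 0%nat 0)); [intros y; rewrite (Hp0 y); auto|]. apply dR_const.
Qed.

Lemma Dp0 : Dp 0.
Proof.
  split; intros x.
  - rewrite q0. apply (dR_ext (fun _ => p 0%nat 0)); [intros y; rewrite (Hp0 y); auto|]. apply dR_const.
  - apply (continuous_ext (fun _ => 0) _ x). intros; rewrite q0; auto. apply cR_const.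
Qed.

Lemma Dp_step n : Dp n -> Dp (n - 1)%nat ->
  Dp (S n) /\ forall x, q (S n) x = / a (S n) * (p n x + x * q n x - a n * q (n - 1)%nat x).
Proof.
  intros [H1 H2] [H3 H4].
  assert (Hd : forall x, is_derive (p (S n)) x (/ a (S n) * (p n x + x * q n x - a n * q (n - 1)%nat x))).
  { intros x. apply (dR_ext (fun y => / a (S n) * (y * p n y - a n * p (n - 1)%nat y))).
    { intros; rewrite p_fun; auto. }
    apply is_derive_scal. eapply dR_eq.
    - apply dR_minus. apply dR_mult. apply dR_id. apply H1. apply is_derive_scal. apply H3.
    - simpl. ring. }
  assert (Hq : forall x, q (S n) x = / a (S n) * (p n x + x * q n x - a n * q (n - 1)%nat x)).
  { intros x. apply is_derive_unique. apply Hd. }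
  split; [split|]; auto.
  - intros x. rewrite Hq. auto.
  - intros x. apply (continuous_ext (fun x => / a (S n) * (p n x + x * q n x - a n * q (n - 1)%nat x)) _ x).
    { intros; rewrite Hq; auto. }
    apply cR_mult. apply cR_const. apply cR_minus. apply cR_plus.
    + apply (cR_der _ _ _ (H1 x)).
    + apply cR_mult. apply cR_id. auto.
    + apply cR_mult. apply cR_const. auto.
Qed.

Lemma Dp_all n : Dp n.
Proof.
  assert (forall n, Dp n /\ Dp (S n)).
  { induction n0.
    - split. apply Dp0. apply (Dp_step 0 Dp0 Dp0).
    - destruct IHn0 as [I1 I2]. split; auto.
      apply (Dp_step (S n0) I2). replace (S n0 - 1)%nat with n0 by lia. auto. }
  exact (proj1 (H n)).
Qed.

Lemma q_rec n x : q (S n) x = / a (S n) * (p n x + x * q n x - a n * q (n - 1)%nat x).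
Proof. apply (Dp_step n (Dp_all n) (Dp_all (n-1))). Qed.


Lemma ip_p_eq m : ip (p m) m = 1.
Proof. rewrite ip_p, Nat.eqb_refl. auto. Qed.
Lemma ip_p_neq m k : m <> k -> ip (p m) k = 0.
Proof. intros H. rewrite ip_p. apply Nat.eqb_neq in H. rewrite H. auto. Qed.

Lemma isip_comb3 f1 f2 f3 k l1 l2 l3 c d : isip f1 k l1 -> isip f2 k l2 -> isip f3 k l3 ->
  isip (fun x => c * (f1 x + f2 x - d * f3 x)) k (c * (l1 + l2 - d * l3)).
Proof.
  intros H1 H2 H3.
  pose proof (isip_lin _ _ _ _ _ 1 1 H1 H2) as H12.
  pose proof (isip_lin _ _ _ _ _ c (- (c * d)) H12 H3) as H.
  unfold isip in *. eapply iext; [| replace (c * (l1 + l2 - d * l3)) with (c * (1 * l1 + 1 * l2) + - (c * d) * l3) by ring; exact H].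
  intros x. simpl. ring.
Qed.

Definition Qp n := G (q n) /\ (forall k, (n <= k)%nat -> ip (q n) k = 0) /\ ((1 <= n)%nat -> ip (q n) (n - 1)%nat = INR n / a n).

Lemma Qp_step n : Qp n -> Qp (n - 1)%nat -> Qp (S n).
Proof.
  intros [G1 [Z1 V1]] [G2 [Z2 V2]].
  assert (Hq : q (S n) = fun x => / a (S n) * (p n x + x * q n x - a n * q (n - 1)%nat x)).
  { apply functional_extensionality. intros x. apply q_rec. }
  assert (Hi : forall k, isip (q (S n)) k (/ a (S n) * (ip (p n) k + (a (S k) * ip (q n) (S k) + a k * ip (q n) (k - 1)%nat) - a n * ip (q (n - 1)%nat) k))).
  { intros k. rewrite Hq. apply isip_comb3. apply G_p. apply isip_x; auto. apply G2. }
  assert (HS := Hpos (S n) ltac:(lia)).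
  split; [|split].
  - apply (isip_G _ _ Hi).
  - intros k Hk. rewrite (isip_ip _ _ _ (Hi k)).
    rewrite ip_p_neq by lia. rewrite Z1 by lia. rewrite Z1 by lia. rewrite Z2 by lia. ring.
  - intros _. rewrite (isip_ip _ _ _ (Hi _)). replace (S n - 1)%nat with n by lia.
    rewrite ip_p_eq. rewrite Z1 by lia. rewrite Z2 by lia.
    destruct n as [|n'].
    + rewrite Ha0. change (INR 1) with 1. field. lra.
    + rewrite V1 by lia. assert (Hn := Hpos (S n') ltac:(lia)). rewrite !S_INR. field. split; apply Rgt_not_eq; lra.
Qed.

Lemma Qp0 : Qp 0.
Proof.
  assert (Hq : q 0 = fun x => 0 * p 0%nat x + 0 * p 0%nat x).
  { apply functional_extensionality. intros x. rewrite q0. ring. }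
  assert (Hi : forall k, isip (q 0) k (0 * ip (p 0) k + 0 * ip (p 0) k)).
  { intros k. rewrite Hq. apply isip_lin; apply G_p. }
  split; [|split].
  - apply (isip_G _ _ Hi).
  - intros k _. rewrite (isip_ip _ _ _ (Hi k)). ring.
  - intros H. lia.
Qed.

Lemma Qp_all n : Qp n.
Proof.
  assert (forall n, Qp n /\ Qp (S n)).
  { induction n0.
    - split. apply Qp0. apply (Qp_step 0 Qp0 Qp0).
    - destruct IHn0 as [I1 I2]. split; auto.
      apply (Qp_step (S n0) I2). replace (S n0 - 1)%nat with n0 by lia. auto. }
  exact (proj1 (H n)).
Qed.

Variable t : R.
Hypothesis Hwd : forall x, is_derive w x (-(x^3 + 2*t*x) * w x).

Lemma freud_int n : (1 <= n)%nat ->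
  1 * (1 * ip (q n) (n - 1)%nat + 1 * ip (q (n - 1)%nat) n) +
  1 * ((-1) * ip (fun x => x * (x * (x * p n x))) (n - 1)%nat + (- (2 * t)) * ip (fun x => x * p n x) (n - 1)%nat) = 0.
Proof.
  intros Hn.
  destruct (Qp_all n) as [Gn _]. destruct (Qp_all (n-1)) as [Gm _].
  assert (G1 := G_x _ (G_p n)). assert (G2 := G_x _ G1). assert (G3 := G_x _ G2).
  pose (dF := fun x => q n x * p (n - 1)%nat x * w x + p n x * q (n - 1)%nat x * w x
                        + p n x * p (n - 1)%nat x * (-(x^3 + 2*t*x) * w x)).
  apply (boundary (fun x => p n x * p (n - 1)%nat x * w x) dF _ 0).
  - intros x. unfold dF. destruct (Dp_all n) as [D1 _]. destruct (Dp_all (n-1)) as [D2 _].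
    eapply dR_eq. apply dR_mult. apply dR_mult. apply D1. apply D2. apply Hwd. rring.
  - intros x. unfold dF. destruct (Dp_all n) as [D1 C1]. destruct (Dp_all (n-1)) as [D2 C2].
    assert (Cw : forall x, continuous w x) by (intros y; apply (cR_der _ _ _ (Hwd y))).
    assert (Cp1 : forall x, continuous (p n) x) by (intros y; apply (cR_der _ _ _ (D1 y))).
    assert (Cp2 : forall x, continuous (p (n-1)%nat) x) by (intros y; apply (cR_der _ _ _ (D2 y))).
    assert (Cpol : continuous (fun y => -(y^3 + 2*t*y)) x).
    { apply (cR_der _ _ (-(3*x^2+2*t))). auto_derive; auto. ring. }
    apply cR_plus; [apply cR_plus|].
    + apply cR_mult; [apply cR_mult|]; auto.
    + apply cR_mult; [apply cR_mult|]; auto.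
    + apply cR_mult; [apply cR_mult|]; auto. apply cR_mult; auto.
  - pose proof (ilin _ _ _ _ 1 1 (ilin _ _ _ _ 1 1 (Gn (n-1)%nat) (Gm n)) (ilin _ _ _ _ (-1) (-(2*t)) (G3 (n-1)%nat) (G1 (n-1)%nat))) as H.
    eapply iext; [| exact H]. intros x. unfold dF. simpl. ring.
  - pose proof (Hort n (n-1)) as H. replace (Nat.eqb n (n-1)) with false in H; auto.
    symmetry. apply Nat.eqb_neq. lia.
Qed.

Lemma freud n : (1 <= n)%nat ->
  a n ^ 2 * (a (n - 1)%nat ^ 2 + a n ^ 2 + a (S n) ^ 2) + 2 * t * a n ^ 2 = INR n.
Proof.
  intros Hn. pose proof (freud_int n Hn) as H.
  destruct (Qp_all n) as [_ [_ Vn]]. destruct (Qp_all (n-1)) as [_ [Zm _]].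
  rewrite Vn in H by lia. rewrite Zm in H by lia.
  assert (G0 := G_p n). assert (G1 := G_x _ G0). assert (G2 := G_x _ G1).
  destruct n as [|m]; [lia|]. replace (S m - 1)%nat with m in * by lia.
  assert (E1a : ip (fun x => x * p (S m) x) m = a (S m)).
  { rewrite (ip_x (p (S m)) m G0). rewrite ip_p_eq. rewrite ip_p_neq by lia. ring. }
  assert (E1b : ip (fun x => x * p (S m) x) (S (S m)) = a (S (S m))).
  { rewrite (ip_x (p (S m)) _ G0). rewrite ip_p_neq by lia. replace (S (S m) - 1)%nat with (S m) by lia.
    rewrite ip_p_eq. ring. }
  assert (E2a : ip (fun x => x * (x * p (S m) x)) (S m) = a (S (S m)) ^ 2 + a (S m) ^ 2).
  { rewrite (ip_x (fun y => y * p (S m) y) _ G1). replace (S m - 1)%nat with m by lia.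
    rewrite E1a, E1b. ring. }
  assert (E3 : ip (fun x => x * (x * (x * p (S m) x))) m = a (S m) * (a (S (S m)) ^ 2 + a (S m) ^ 2 + a m ^ 2)).
  { rewrite (ip_x (fun y => y * (y * p (S m) y)) _ G2). rewrite E2a.
    destruct m as [|m'].
    - rewrite Ha0. ring.
    - replace (S m' - 1)%nat with m' by lia.
      rewrite (ip_x (fun y => y * p (S (S m')) y) m' G1).
      rewrite E1a.
      rewrite (ip_x (p (S (S m'))) (m' - 1)%nat G0). rewrite ip_p_neq by lia. rewrite ip_p_neq by lia. ring. }
  rewrite E3, E1a in H.
  assert (HA := Hpos (S m) ltac:(lia)).
  set (z := INR (S m) / a (S m)) in H.
  assert (Hz : z = a (S m) * (a (S (S m)) ^ 2 + a (S m) ^ 2 + a m ^ 2) + 2 * t * a (S m)) by lra.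
  replace (INR (S m)) with (a (S m) * z) by (unfold z; field; lra).
  rewrite Hz. ring.
Qed.

Lemma G_xpow j : G (fun x => x ^ j * p 0%nat x).
Proof.
  induction j.
  - replace (fun x => x ^ 0 * p 0%nat x) with (p 0%nat). apply G_p.
    apply functional_extensionality; intros; simpl; ring.
  - replace (fun x => x ^ S j * p 0%nat x) with (fun x => x * (x ^ j * p 0%nat x)).
    apply G_x; auto. apply functional_extensionality; intros; simpl; ring.
Qed.

Lemma mom_rel : exists c, c <> 0 /\
  is_RInt_gen (fun x => x ^ 0 * w x) mI pI (/ c ^ 2) /\
  is_RInt_gen (fun x => x ^ 2 * w x) mI pI (a 1%nat ^ 2 / c ^ 2) /\
  is_RInt_gen (fun x => x ^ 4 * w x) mI pI (a 1%nat ^ 2 * (a 1%nat ^ 2 + a 2%nat ^ 2) / c ^ 2) /\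
  forall j, ex_RInt_gen (fun x => x ^ j * w x) mI pI.
Proof.
  set (c := p 0%nat 0).
  assert (Hc : c <> 0).
  { intros Hc0. pose proof (Hort 0 0) as H0. simpl in H0.
    assert (H1 := is_RInt_gen_scal _ 0 _ H0).
    eapply iext in H1. 2:{ intros x. instantiate (1 := fun x => p 0%nat x * p 0%nat x * w x).
      change (0 * (p 0%nat x * p 0%nat x * w x) = p 0%nat x * p 0%nat x * w x). rewrite (Hp0 x). fold c. rewrite Hc0. ring. }
    pose proof (is_RInt_gen_unique _ _ H0). pose proof (is_RInt_gen_unique _ _ H1).
    rewrite H in H2. change (1 = 0 * 1) in H2. lra. }
  assert (Gen : forall j l, isip (fun x => x ^ j * p 0%nat x) 0 l -> is_RInt_gen (fun x => x ^ j * w x) mI pI (l / c ^ 2)).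
  { intros j l H. unfold isip in H. apply (is_RInt_gen_scal _ (/ c ^ 2)) in H.
    replace (l / c ^ 2) with (scal (/ c ^ 2) l) by (change (/ c ^ 2 * l = l / c ^ 2); field; auto).
    eapply iext; [| exact H]. intros x. change (/ c ^ 2 * (x ^ j * p 0%nat x * p 0%nat x * w x) = x ^ j * w x).
    rewrite (Hp0 x). fold c. field. auto. }
  exists c. split; auto.
  assert (G0 := G_p 0). assert (G1 := G_x _ G0). assert (G2 := G_x _ G1). assert (G3 := G_x _ G2).
  assert (G4 := G_x _ G3).
  assert (E1 : forall k, ip (fun x => x * p 0%nat x) k = a (S k) * (if Nat.eqb 0 (S k) then 1 else 0) + a k * (if Nat.eqb 0 (k - 1) then 1 else 0)).
  { intros k. rewrite (ip_x _ k G0). rewrite !ip_p. auto. }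
  assert (E2 : ip (fun x => x * (x * p 0%nat x)) 0 = a 1%nat ^ 2).
  { rewrite (ip_x _ 0 G1). rewrite !E1. simpl. rewrite Ha0. ring. }
  assert (E2' : ip (fun x => x * (x * p 0%nat x)) 2 = a 2%nat * a 1%nat).
  { rewrite (ip_x _ 2 G1). rewrite !E1. simpl. ring. }
  assert (E3 : ip (fun x => x * (x * (x * p 0%nat x))) 1 = a 1%nat * (a 1%nat ^ 2 + a 2%nat ^ 2)).
  { rewrite (ip_x _ 1 G2). rewrite E2'. simpl (1-1)%nat. rewrite E2. ring. }
  assert (E4 : ip (fun x => x * (x * (x * (x * p 0%nat x)))) 0 = a 1%nat ^ 2 * (a 1%nat ^ 2 + a 2%nat ^ 2)).
  { rewrite (ip_x _ 0 G3). rewrite E3. rewrite Ha0. ring. }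
  split; [|split; [|split]].
  - replace (/ c ^ 2) with (1 / c ^ 2) by (field; auto). apply Gen.
    rewrite <- (ip_p_eq 0). replace (fun x => x ^ 0 * p 0%nat x) with (p 0%nat). apply G0.
    apply functional_extensionality; intros; simpl; ring.
  - apply Gen. rewrite <- E2. replace (fun x => x ^ 2 * p 0%nat x) with (fun x => x * (x * p 0%nat x)). apply G2.
    apply functional_extensionality; intros; simpl; ring.
  - apply Gen. rewrite <- E4. replace (fun x => x ^ 4 * p 0%nat x) with (fun x => x * (x * (x * (x * p 0%nat x)))). apply G4.
    apply functional_extensionality; intros; simpl; ring.
  - intros j. eexists. apply Gen. apply G_xpow.
Qed.

End Poly.

Lemma iscale (f : R -> R) l c : is_RInt_gen f mI pI l -> is_RInt_gen (fun x => c * f x) mI pI (c * l).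
Proof. intros H. exact (is_RInt_gen_scal _ c _ H). Qed.

Lemma even_pow_nonneg k x : 0 <= x ^ (2 * k).
Proof. rewrite pow_mult. apply pow_le. nra. Qed.

Lemma qw_shift s h x : quartic_weight (s + h) x = quartic_weight s x * exp (- (h * x ^ 2)).
Proof. unfold quartic_weight. rewrite <- exp_plus. f_equal. ring. Qed.

Section Mom.
Hypothesis Hex : forall j s, ex_RInt_gen (fun x => x ^ j * quartic_weight s x) mI pI.
Definition M j s : R := RInt_gen (fun x => x ^ j * quartic_weight s x) mI pI.

Lemma M_is j s : is_RInt_gen (fun x => x ^ j * quartic_weight s x) mI pI (M j s).
Proof. unfold M. exact (RInt_gen_correct (V:=R_CompleteNormedModule) _ (Hex j s)). Qed.

Lemma M_nonneg k s : 0 <= M (2 * k) s.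
Proof.
  replace 0 with (0 * M (2 * k) s) at 1 by ring.
  apply (ile (fun x => 0 * (x ^ (2 * k) * quartic_weight s x)) (fun x => x ^ (2 * k) * quartic_weight s x) (0 * M (2*k) s)).
  - intros x. rewrite Rmult_0_l. apply Rmult_le_pos. apply even_pow_nonneg. unfold quartic_weight. left; apply exp_pos.
  - apply iscale. apply M_is.
  - apply M_is.
Qed.

Lemma exp_le_mono x y : x <= y -> exp x <= exp y.
Proof. intros [H|H]. left; apply exp_increasing; auto. subst; lra. Qed.

Lemma M_mono k s r : s <= r -> M (2 * k) r <= M (2 * k) s.
Proof.
  intros Hsr. apply (ile (fun x => x ^ (2 * k) * quartic_weight r x) (fun x => x ^ (2 * k) * quartic_weight s x)); try apply M_is.
  intros x. apply Rmult_le_compat_l. apply even_pow_nonneg. unfold quartic_weight.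
  apply exp_le_mono. assert (0 <= x^2) by nra. nra.
Qed.

Lemma M_diff k s h :
  - h * M (2 * k + 2) s <= M (2 * k) (s + h) - M (2 * k) s <= - h * M (2 * k + 2) (s + h).
Proof.
  pose proof (ilin _ _ _ _ 1 (-1) (M_is (2*k) (s+h)) (M_is (2*k) s)) as HD.
  assert (Hp : forall x, x ^ (2 * k + 2) = x ^ (2 * k) * x ^ 2) by (intros; rewrite pow_add; auto).
  assert (Hpt : forall x, - h * (x ^ (2 * k + 2) * quartic_weight s x) <=
      1 * (x ^ (2 * k) * quartic_weight (s + h) x) + -1 * (x ^ (2 * k) * quartic_weight s x)
      <= - h * (x ^ (2 * k + 2) * quartic_weight (s + h) x)).
  { intros x. rewrite !Hp. rewrite !qw_shift.
    assert (E0 := even_pow_nonneg k x). assert (W0 : 0 < quartic_weight s x) by apply exp_pos.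
    set (y := x ^ 2). assert (Y0 : 0 <= y) by (unfold y; nra).
    assert (e1 := exp_ineq1_le (- (h * y))). assert (e2 := exp_ineq1_le (h * y)).
    assert (e3 : exp (- (h * y)) * exp (h * y) = 1) by (rewrite <- exp_plus; replace (- (h*y) + h*y) with 0 by ring; apply exp_0).
    assert (e4 := exp_pos (- (h * y))).
    set (E := x ^ (2 * k) * quartic_weight s x). assert (E1 : 0 <= E) by (unfold E; nra).
    assert (R1 : x ^ (2 * k) * (quartic_weight s x * exp (- (h * y))) = E * exp (- (h * y))) by (unfold E; ring).
    assert (R2 : x ^ (2 * k) * y * quartic_weight s x = E * y) by (unfold E; ring).
    assert (R3 : x ^ (2 * k) * y * (quartic_weight s x * exp (- (h * y))) = E * y * exp (- (h * y))) by (unfold E; ring).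
    rewrite R1, R2, R3.
    assert (F1 : exp (- (h * y)) * (1 + h * y) <= 1) by nra.
    split; nra. }
  split.
  - replace (M (2 * k) (s + h) - M (2 * k) s) with (1 * M (2 * k) (s + h) + -1 * M (2 * k) s) by ring.
    apply (ile _ _ _ _ (fun x => proj1 (Hpt x))); auto. apply iscale, M_is.
  - replace (M (2 * k) (s + h) - M (2 * k) s) with (1 * M (2 * k) (s + h) + -1 * M (2 * k) s) by ring.
    apply (ile _ _ _ _ (fun x => proj2 (Hpt x))); auto. apply iscale, M_is.
Qed.

Lemma M_der k s : is_derive (M (2 * k)) s (- M (2 * k + 2) s).
Proof.
  apply is_derive_Reals. intros eps Heps.
  set (K := M (2 * k + 4) (s - 1)).
  assert (K0 : 0 <= K) by (unfold K; replace (2 * k + 4)%nat with (2 * (k + 2))%nat by lia; apply M_nonneg).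
  assert (Hd : 0 < Rmin 1 (eps / (K + 1))).
  { apply Rmin_pos. lra. apply Rdiv_lt_0_compat; lra. }
  exists (mkposreal _ Hd). intros h Hh0 Hh. simpl in Hh.
  assert (Hh1 : Rabs h < 1) by (apply Rlt_le_trans with (1 := Hh); apply Rmin_l).
  assert (Hh2 : Rabs h < eps / (K + 1)) by (apply Rlt_le_trans with (1 := Hh); apply Rmin_r).
  assert (B2 := M_diff (k + 1) s h). replace (2 * (k + 1))%nat with (2 * k + 2)%nat in B2 by lia.
  replace (2 * k + 2 + 2)%nat with (2 * k + 4)%nat in B2 by lia.
  assert (Ks : M (2 * k + 4) s <= K).
  { unfold K. replace (2 * k + 4)%nat with (2 * (k + 2))%nat by lia. apply M_mono. lra. }
  assert (Ksh : M (2 * k + 4) (s + h) <= K).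
  { unfold K. replace (2 * k + 4)%nat with (2 * (k + 2))%nat by lia. apply M_mono.
    apply Rabs_def2 in Hh1. lra. }
  assert (N1 : 0 <= M (2 * k + 4) s) by (replace (2 * k + 4)%nat with (2 * (k + 2))%nat by lia; apply M_nonneg).
  assert (N2 : 0 <= M (2 * k + 4) (s + h)) by (replace (2 * k + 4)%nat with (2 * (k + 2))%nat by lia; apply M_nonneg).
  assert (C : Rabs (M (2 * k + 2) (s + h) - M (2 * k + 2) s) <= Rabs h * K).
  { destruct (Rle_lt_dec 0 h) as [hp|hn].
    - rewrite (Rabs_right h) by lra. apply Rabs_le. nra.
    - rewrite (Rabs_left h) by lra. apply Rabs_le. nra. }
  assert (B1 := M_diff k s h).
  set (A := M (2 * k + 2) s) in *. set (A' := M (2 * k + 2) (s + h)) in *.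
  set (D := M (2 * k) (s + h) - M (2 * k) s) in *.
  assert (Q : Rabs (D / h - - A) <= Rabs (A' - A)).
  { replace (D / h - - A) with ((D + h * A) / h) by (field; auto).
    rewrite Rabs_div by auto.
    apply Rmult_le_reg_r with (Rabs h). apply Rabs_pos_lt; auto.
    unfold Rdiv. rewrite Rmult_assoc, Rinv_l by (apply Rabs_no_R0; auto). rewrite Rmult_1_r.
    rewrite <- Rabs_mult. apply Rabs_le.
    assert (Z1 := Rle_abs ((A' - A) * h)). assert (Z2 := Rle_abs (- ((A' - A) * h))).
    rewrite Rabs_Ropp in Z2.
    assert (Hq : 0 <= D + h * A <= h * (A - A')) by lra. split; lra. }
  apply Rle_lt_trans with (Rabs h * K). lra.
  apply Rle_lt_trans with (eps / (K + 1) * K).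
  { apply Rmult_le_compat_r; lra. }
  apply Rlt_le_trans with (eps / (K + 1) * (K + 1)).
  { apply Rmult_lt_compat_l. apply Rdiv_lt_0_compat; lra. lra. }
  right. field. lra.
Qed.
End Mom.

Ltac toR := match goal with |- ?x = ?y => change (x = y :> R) end; cbv beta.

Section Final.
Variables (p : R -> nat -> R -> R) (a : R -> nat -> R).
Hypothesis Hp : forall t, orthonormal_system (quartic_weight t) (p t).
Hypothesis Ha : forall t, recurrence_coeffs (p t) (a t).

Lemma Hwd t : forall x, is_derive (quartic_weight t) x (-(x^3 + 2*t*x) * quartic_weight t x).
Proof.
  intros x. unfold quartic_weight. auto_derive. auto.
  match goal with |- _ * exp ?u = _ * exp ?v => replace u with v by field end. field.
Qed.

Lemma Hp0 t : forall x, p t 0%nat x = p t 0%nat 0.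
Proof.
  destruct (Hp t) as [H _]. destruct (H 0%nat) as [c [_ Hc]].
  intros x. rewrite !Hc. simpl. ring.
Qed.

Lemma Ha0 t : a t 0%nat = 0. Proof. apply (Ha t). Qed.
Lemma Hpos t : forall n, (1 <= n)%nat -> 0 < a t n. Proof. apply (Ha t). Qed.
Lemma Hrec t : forall n x, a t (S n) * p t (S n) x = x * p t n x - a t n * p t (n - 1)%nat x.
Proof. apply (Ha t). Qed.
Lemma Hort t : forall m n, is_RInt_gen (fun x => p t m x * p t n x * quartic_weight t x) mI pI (if Nat.eqb m n then 1 else 0).
Proof. apply (Hp t). Qed.

Lemma freud_t t n : (1 <= n)%nat ->
  a t n ^ 2 * (a t (n - 1)%nat ^ 2 + a t n ^ 2 + a t (S n) ^ 2) + 2 * t * a t n ^ 2 = INR n.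
Proof.
  apply (freud (quartic_weight t) (p t) (a t) (Hort t) (Ha0 t) (Hpos t) (Hrec t) (Hp0 t) t (Hwd t)).
Qed.

Definition U n s := a s n ^ 2.

Lemma U0 s : U 0 s = 0. Proof. unfold U. rewrite Ha0. ring. Qed.
Lemma Upos n s : (1 <= n)%nat -> 0 < U n s.
Proof. intros H. unfold U. assert (H1 := Hpos s n H). nra. Qed.

Lemma FR n s : U n s * (U (n - 1)%nat s + U n s + U (S n) s + 2 * s) = INR n.
Proof.
  destruct n as [|m].
  - rewrite U0. simpl. ring.
  - rewrite <- (freud_t s (S m)) by lia. unfold U. ring.
Qed.

Lemma Hex j s : ex_RInt_gen (fun x => x ^ j * quartic_weight s x) mI pI.
Proof.
  destruct (mom_rel (quartic_weight s) (p s) (a s) (Hort s) (Ha0 s) (Hrec s) (Hp0 s)) as [c [_ [_ [_ [_ H]]]]].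
  apply H.
Qed.

Lemma Mvals s : 0 < M 0 s /\ U 1 s = M 2 s / M 0 s /\ M 4 s / M 0 s = U 1 s * (U 1 s + U 2 s).
Proof.
  destruct (mom_rel (quartic_weight s) (p s) (a s) (Hort s) (Ha0 s) (Hrec s) (Hp0 s)) as [c [Hc [H0 [H2 [H4 _]]]]].
  unfold M. rewrite (is_RInt_gen_unique _ _ H0), (is_RInt_gen_unique _ _ H2), (is_RInt_gen_unique _ _ H4).
  assert (c2 : 0 < c ^ 2) by (apply pow2_gt_0 ; auto).
  unfold U. split; [|split].
  - apply Rinv_0_lt_compat; auto.
  - field. lra.
  - field. lra.
Qed.

Definition Toda n := forall s, is_derive (U n) s (U n s * (U (n - 1)%nat s - U (S n) s)).

Lemma Toda0 : Toda 0.
Proof.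
  intros s. apply (dR_ext (fun _ => 0)). intros; rewrite U0; auto.
  rewrite U0. eapply dR_eq. apply dR_const. toR. ring.
Qed.

Lemma Toda1 : Toda 1.
Proof.
  intros s. apply (dR_ext (fun s => M 2 s * / M 0 s)).
  { intros y. destruct (Mvals y) as [_ [E _]]. rewrite E. auto. }
  destruct (Mvals s) as [P0 [E1 E2]].
  eapply dR_eq. apply dR_mult. apply (M_der Hex 1 s). apply dR_inv. apply (M_der Hex 0 s). lra.
  toR. simpl (2 * 1 + 2)%nat. simpl (2 * 0 + 2)%nat. simpl (1 - 1)%nat. rewrite U0.
  replace (- M 4 s * / M 0 s) with (- (M 4 s / M 0 s)) by (unfold Rdiv; ring).
  rewrite E2. rewrite E1. field. lra.
Qed.

Lemma Toda_step m : Toda m -> Toda (S m) -> Toda (S (S m)).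
Proof.
  intros Tm Tm1 s.
  apply (dR_ext (fun s => INR (S m) * / U (S m) s - U (S m) s - U m s - 2 * s)).
  { intros y. assert (F := FR (S m) y). assert (P := Upos (S m) y ltac:(lia)).
    replace (S m - 1)%nat with m in F by lia. rewrite <- F. field. lra. }
  assert (P := Upos (S m) s ltac:(lia)).
  eapply dR_eq.
  - apply dR_minus. apply dR_minus. apply dR_minus.
    apply is_derive_scal. apply dR_inv. apply Tm1. lra. apply Tm1. apply Tm.
    eapply dR_eq. apply is_derive_scal. apply dR_id. toR. reflexivity.
  - toR. assert (F0 := FR m s). assert (F1 := FR (S m) s). assert (F2 := FR (S (S m)) s).
    replace (S m - 1)%nat with m in * by lia. replace (S (S m) - 1)%nat with (S m) in * by lia.
    set (u := U (S m) s) in *. set (A := U m s) in *. set (B := U (S (S m)) s) in *.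
    set (C := U (m - 1)%nat s) in *. set (E := U (S (S (S m))) s) in *.
    assert (HAC : A * (C - u) = INR m - A * (A + 2 * u + 2 * s)) by lra.
    assert (HBE : B * (u - E) = B * (2 * u + B + 2 * s) - INR (S (S m))) by lra.
    rewrite HAC, HBE. rewrite <- F1. rewrite S_INR. rewrite S_INR. rewrite S_INR in F1.
    assert (HmR : INR m = u * (A + u + B + 2 * s) - 1) by lra.
    rewrite HmR. field. lra.
Qed.

Lemma Toda_all n : Toda n.
Proof.
  assert (forall n, Toda n /\ Toda (S n)).
  { induction n0. split. apply Toda0. apply Toda1.
    destruct IHn0. split; auto. apply Toda_step; auto. }
  exact (proj1 (H n)).
Qed.

End Final.



Theorem mainTheorem12
  (p : R -> nat -> R -> R) (a : R -> nat -> R)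
  (Hp : forall t, orthonormal_system (quartic_weight t) (p t))
  (Ha : forall t, recurrence_coeffs (p t) (a t)) :
  forall (n : nat), (1 <= n)%nat ->
    (forall t,
       (a t n) ^ 2 * ((a t (n - 1)%nat) ^ 2 + (a t n) ^ 2 + (a t (S n)) ^ 2)
         + 2 * t * (a t n) ^ 2 = INR n) /\
    (forall t,
       ex_derive (fun s => a s n) t /\
       ex_derive (fun s => Derive (fun r => a r n) s) t /\
       4 * (a t n) ^ 3 * Derive_n (fun s => a s n) 2 t
         = (3 * (a t n) ^ 4 + 2 * t * (a t n) ^ 2 - INR n)
           * ((a t n) ^ 4 + 2 * t * (a t n) ^ 2 + INR n)) /\
    (let u := fun s => (a s n) ^ 2 in
     let alpha := - INR n / 2 in
     let beta := - (INR n) ^ 2 / 2 in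
     forall t,
       ex_derive u t /\
       ex_derive (fun s => Derive u s) t /\
       Derive_n u 2 t
         = (Derive u t) ^ 2 / (2 * u t) + 3 * (u t) ^ 3 / 2 + 4 * t * (u t) ^ 2
           + 2 * (t ^ 2 - alpha) * u t + beta / u t).
Proof.
  intros n Hn.
  assert (T := Toda_all p a Hp Ha).
  assert (Alg : forall t,
    U a (n - 1)%nat t * (U a (n - 1 - 1)%nat t - U a n t) = INR n - 1 - U a (n - 1)%nat t * (U a (n - 1)%nat t + 2 * U a n t + 2 * t) /\
    U a (S n) t * (U a n t - U a (S (S n)) t) = U a (S n) t * (2 * U a n t + U a (S n) t + 2 * t) - (INR n + 1) /\
    INR n = U a n t * (U a (n - 1)%nat t + U a n t + U a (S n) t + 2 * t)).
  { intros t. assert (F0 := FR p a Hp Ha (n - 1)%nat t). assert (F1 := FR p a Hp Ha n t). assert (F2 := FR p a Hp Ha (S n) t).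
    replace (S (n - 1)) with n in F0 by lia. replace (S n - 1)%nat with n in F2 by lia.
    rewrite minus_INR in F0 by lia. rewrite S_INR in F2. simpl (INR 1) in F0.
    split; [|split]; lra. }
  split; [|split].
  - intros t. apply (freud_t p a Hp Ha t n Hn).
  -
    assert (Da : forall s, is_derive (fun s => a s n) s (/ 2 * (a s n * (U a (n - 1)%nat s - U a (S n) s)))).
    { intros s. assert (P := Hpos p a Ha s n Hn).
      apply (dR_ext (fun s => sqrt (U a n s))).
      { intros y. unfold U. apply sqrt_pow2. assert (P' := Hpos p a Ha y n Hn). lra. }
      eapply dR_eq. apply is_derive_sqrt. apply (T n s). apply Upos with p; auto.
      toR. unfold U. rewrite sqrt_pow2 by lra. field. lra. }
    assert (DaF : Derive (fun s => a s n) = fun s => / 2 * (a s n * (U a (n - 1)%nat s - U a (S n) s))).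
    { apply functional_extensionality. intros s. apply is_derive_unique. apply Da. }
    assert (D2 : forall t, is_derive (Derive (fun s => a s n)) t
       (/ 2 * ((/ 2 * (a t n * (U a (n - 1)%nat t - U a (S n) t))) * (U a (n - 1)%nat t - U a (S n) t)
          + a t n * (U a (n - 1)%nat t * (U a (n - 1 - 1)%nat t - U a n t) - U a (S n) t * (U a n t - U a (S (S n)) t))))).
    { intros t. rewrite DaF. apply is_derive_scal. eapply dR_eq. apply (dR_mult (fun s => a s n) (fun s => U a (n - 1)%nat s - U a (S n) s)). apply Da. apply dR_minus. apply (T (n-1)%nat). apply (T (S n)). toR. replace (S (n - 1)) with n by lia. replace (S n - 1)%nat with n by lia. reflexivity. }
    intros t. split; [|split].
    + exists (/ 2 * (a t n * (U a (n - 1)%nat t - U a (S n) t))). apply Da.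
    + eexists. apply D2.
    + change (Derive_n (fun s => a s n) 2 t) with (Derive (Derive (fun s => a s n)) t).
      rewrite (is_derive_unique _ _ _ (D2 t)).
      destruct (Alg t) as [H1 [H2 H3]]. rewrite H1, H2.
      rewrite H3. unfold U. toR. field.
  - cbv zeta. intros t.
    assert (Du : Derive (fun s => a s n ^ 2) = fun s => U a n s * (U a (n - 1)%nat s - U a (S n) s)).
    { apply functional_extensionality. intros s. apply is_derive_unique. apply (T n s). }
    assert (D2 : is_derive (Derive (fun s => a s n ^ 2)) t
       (U a n t * (U a (n - 1)%nat t - U a (S n) t) * (U a (n - 1)%nat t - U a (S n) t)
          + U a n t * (U a (n - 1)%nat t * (U a (n - 1 - 1)%nat t - U a n t) - U a (S n) t * (U a n t - U a (S (S n)) t)))).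
    { rewrite Du. eapply dR_eq. apply (dR_mult (U a n) (fun s => U a (n - 1)%nat s - U a (S n) s)). apply (T n). apply dR_minus. apply (T (n-1)%nat). apply (T (S n)). toR. replace (S (n - 1)) with n by lia. replace (S n - 1)%nat with n by lia. reflexivity. }
    split; [|split].
    + exists (U a n t * (U a (n - 1)%nat t - U a (S n) t)). apply (T n).
    + eexists. apply D2.
    + change (Derive_n (fun s => a s n ^ 2) 2 t) with (Derive (Derive (fun s => a s n ^ 2)) t).
      rewrite (is_derive_unique _ _ _ D2).
      destruct (Alg t) as [H1 [H2 H3]]. rewrite H1, H2.
      change (a t n ^ 2) with (U a n t).
      assert (P := Upos p a Ha n t Hn).
      rewrite H3. rewrite Du. toR. field. lra.
Qed.
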